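(* Let $L$ be a finite lattice and $\Theta$ a lattice congruence on $L$ such that no atom of $L$ is congruent to $\hat0$ and no coatom of $L$ is congruent to $\hat1$. Then the proper part of $L$ is homotopy equivalent to the proper part of $L/\Theta$.
   Context: A lattice congruence is an equivalence relation respecting joins and meets; $L/\Theta$ is the quotient lattice of classes ($[a]\le[b]$ iff some $x\in[a]$, $y\in[b]$ have $x\le y$). $\hat0,\hat1$ are the minimum and maximum; atoms cover $\hat0$, coatoms are covered by $\hat1$. The proper part of a finite lattice is the poset obtained by removing $\hat0$ and $\hat1$; topological statements about a poset refer to its order complex (the simplicial complex of its chains). *)

(* Defs.v *)
From HB Require Import structures.
From mathcomp Require Import all_boot all_order all_algebra.
From mathcomp Require Import all_classical all_reals topology normedtype.
Import numFieldNormedType.Exports.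
Set Implicit Arguments.
Unset Strict Implicit.
Unset Printing Implicit Defensive.
Import Order.Theory GRing.Theory Num.Theory.
Local Open Scope classical_set_scope.
Local Open Scope ring_scope.
Local Open Scope order_scope.

Definition lattice_congruence (disp : Order.disp_t) (L : latticeType disp)
  (Th : rel L) : Prop :=
  [/\ equivalence_rel Th,
      (forall x y z, Th x y -> Th (x `|` z) (y `|` z) /\ Th (z `|` x) (z `|` y)) &
      (forall x y z, Th x y -> Th (x `&` z) (y `&` z) /\ Th (z `&` x) (z `&` y))].

Definition cong_class (disp : Order.disp_t) (L : finLatticeType disp)
  (Th : rel L) (x : L) : {set L} := [set y | Th x y].

(* Elements of the quotient L/Th are the congruence classes. *)
Definition is_cong_class (disp : Order.disp_t) (L : finLatticeType disp)
  (Th : rel L) (S : {set L}) : bool := [exists x, S == cong_class Th x].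

Definition quot_le (disp : Order.disp_t) (L : finLatticeType disp)
  (S T : {set L}) : bool := [exists x in S, exists y in T, x <= y].

Definition is_atom (disp : Order.disp_t) (L : tbLatticeType disp) (a : L) : Prop :=
  \bot < a /\ forall z : L, \bot < z -> z <= a -> z = a.
Definition is_coatom (disp : Order.disp_t) (L : tbLatticeType disp) (a : L) : Prop :=
  a < \top /\ forall z : L, a <= z -> z < \top -> z = a.

(* For a finite set of vertices V, a predicate P selecting the elements of the
   poset, and its order relation le, the geometric realization of the order
   complex (simplicial complex of chains of P) is the set of points x of the
   standard simplex in R^V whose support is a chain of P. *)
Definition order_complex_realization (R : realType) (V : finType)
  (P : pred V) (le : rel V) : set {ptws V -> R} :=
  [set x | [/\ (forall v, (0 <= x v)%R),
              (\sum_(v : V) x v = 1)%R,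
              (forall v, x v != 0%R -> P v) &
              (forall u v, x u != 0%R -> x v != 0%R -> le u v || le v u)]].

Definition unit_interval (R : realType) : set R := [set t : R | (0 <= t <= 1)%R].

Definition homotopic (R : realType) (X Y : topologicalType) (f g : X -> Y) : Prop :=
  exists H : (set_type (@unit_interval R) * X)%type -> Y,
    [/\ continuous H,
        (forall t x, set_val t = 0%R -> H (t, x) = f x) &
        (forall t x, set_val t = 1%R -> H (t, x) = g x)].

Definition homotopy_equivalent (R : realType) (X Y : topologicalType) : Prop :=
  exists (f : X -> Y) (g : Y -> X),
    [/\ continuous f, continuous g,
        homotopic R (g \o f) idfun & homotopic R (f \o g) idfun].

Definition proper_part_space (R : realType) (disp : Order.disp_t)
  (L : finTBLatticeType disp) : topologicalType :=
  set_type (@order_complex_realization R _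
              (fun x : L => (x != \bot) && (x != \top)) (fun x y : L => x <= y)).

Definition quotient_proper_part_space (R : realType) (disp : Order.disp_t)
  (L : finTBLatticeType disp) (Th : rel L) : topologicalType :=
  set_type (@order_complex_realization R _
     (fun S : {set L} => [&& is_cong_class Th S, S != cong_class Th \bot
                          & S != cong_class Th \top])
     (fun S T : {set L} => quot_le S T)).

(* Main.v *)
Require Import Defs.
From HB Require Import structures.
From mathcomp Require Import all_boot all_order all_algebra.
From mathcomp Require Import all_classical all_reals topology normedtype.
From mathcomp Require Import lra.
Import numFieldNormedType.Exports.
Import Order.Theory GRing.Theory Num.Theory.
Set Implicit Arguments.
Unset Strict Implicit.
Local Open Scope ring_scope.
Local Open Scope order_scope.

Section Lat.
Variables (disp : Order.disp_t) (L : finTBLatticeType disp) (Th : rel L).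
Hypothesis HC : lattice_congruence Th.
Hypothesis Hat : forall a : L, is_atom a -> ~ Th a \bot.
Hypothesis Hco : forall a : L, is_coatom a -> ~ Th a \top.

Lemma Th_refl x : Th x x.
Proof. by case: HC => E _ _; case: (E x x x). Qed.
Lemma Th_trans_eq x y : Th x y -> Th x =1 Th y.
Proof. case: HC => E _ _ h z; by case: (E x y z) => _ /(_ h). Qed.
Lemma Th_sym x y : Th x y -> Th y x.
Proof. move=> h; by rewrite -(Th_trans_eq h) Th_refl. Qed.
Lemma Th_trans x y z : Th x y -> Th y z -> Th x z.
Proof. by move=> h; rewrite (Th_trans_eq h). Qed.
Lemma Th_meet x y z : Th x y -> Th (x `&` z) (y `&` z) /\ Th (z `&` x) (z `&` y).
Proof. by case: HC => _ _ M; apply: M. Qed.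
Lemma Th_join x y z : Th x y -> Th (x `|` z) (y `|` z) /\ Th (z `|` x) (z `|` y).
Proof. by case: HC => _ M _; apply: M. Qed.
Lemma Th_meet2 x y1 y2 : Th x y1 -> Th x y2 -> Th x (y1 `&` y2).
Proof.
move=> h1 h2; have [_ a] := Th_meet x h2.
rewrite meetxx in a; have [b _] := Th_meet y2 h1.
exact: Th_trans a b.
Qed.

Lemma atom_below (x : L) : \bot < x -> exists a, is_atom a /\ a <= x.
Proof.
move: {2}#|[set z : L | z < x]| (leqnn #|[set z : L | z < x]|) => n.
elim: n x => [|n IH] x Hn Hx.
  have H : \bot \in [set z : L | z < x] by rewrite inE.
  by move: Hn; rewrite leqn0 => /eqP /cards0_eq E; rewrite E inE in H.
case: (pselect (is_atom x)) => [ax|nax]; first by exists x.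
have [z [Hz1 Hz2 Hz3]] : exists z, [/\ \bot < z, z <= x & z != x].
  apply: contrapT => H; apply: nax; split => // z h1 h2.
  apply/eqP; apply: contrapT => h3; apply: H; exists z; split => //; exact/negP.
have zx : z < x by rewrite lt_neqAle Hz3 Hz2.
have Hc : (#|[set w : L | (w < z)%O]| <= n)%N.
  have : [set w : L | w < z] \proper [set w | w < x].
    apply/properP; split.
      by apply/fintype.subsetP => w; rewrite !inE => h; exact: lt_trans h zx.
    by exists z; rewrite !inE ?zx ?ltxx.
  move/proper_card => h; rewrite -ltnS; exact: leq_trans h Hn.
have [a [aa ax]] := IH z Hc Hz1.
exists a; split => //; exact: le_trans ax (ltW zx).
Qed.

Lemma coatom_above (x : L) : x < \top -> exists a, is_coatom a /\ x <= a.
Proof.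
move: {2}#|[set z : L | x < z]| (leqnn #|[set z : L | x < z]|) => n.
elim: n x => [|n IH] x Hn Hx.
  have H : \top \in [set z : L | x < z] by rewrite inE.
  by move: Hn; rewrite leqn0 => /eqP /cards0_eq E; rewrite E inE in H.
case: (pselect (is_coatom x)) => [ax|nax]; first by exists x.
have [z [Hz1 Hz2 Hz3]] : exists z, [/\ z < \top, x <= z & z != x].
  apply: contrapT => H; apply: nax; split => // z h1 h2.
  apply/eqP; apply: contrapT => h3; apply: H; exists z; split => //; exact/negP.
have zx : x < z by rewrite lt_neqAle eq_sym Hz3 Hz2.
have Hc : (#|[set w : L | (z < w)%O]| <= n)%N.
  have : [set w : L | z < w] \proper [set w | x < w].
    apply/properP; split.
      by apply/fintype.subsetP => w; rewrite !inE => h; exact: lt_trans zx h.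
    by exists z; rewrite !inE ?zx ?ltxx.
  move/proper_card => h; rewrite -ltnS; exact: leq_trans h Hn.
have [a [aa ax]] := IH z Hc Hz1.
exists a; split => //; exact: le_trans (ltW zx) ax.
Qed.

Lemma Th_bot x : Th x \bot -> x = \bot.
Proof.
move=> h; apply/eqP; apply: contraT; rewrite -lt0x => /atom_below [a [aa ax]].
exfalso; apply: (Hat aa); have [h1 _] := Th_meet a h.
by move: h1; rewrite meet0x; move/meet_idPr: ax ->.
Qed.

Lemma Th_top x : Th x \top -> x = \top.
Proof.
move=> h; apply/eqP; apply: contraT; rewrite -ltx1 => /coatom_above [a [aa ax]].
exfalso; apply: (Hco aa); have [h1 _] := Th_join a h.
by move: h1; rewrite join1x; move/join_idPr: ax ->.
Qed.

Definition lo x := \meet_(y | Th x y) y.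

Lemma lo_min x y : Th x y -> lo x <= y.
Proof. by move=> h; apply: meets_inf. Qed.
Lemma lo_le x : lo x <= x.
Proof. exact/lo_min/Th_refl. Qed.
Lemma Th_lo x : Th x (lo x).
Proof.
suff : Th x (x `&` lo x) by move/meet_idPr: (lo_le x) ->.
rewrite /lo; apply: (big_rec (fun m => Th x (x `&` m))).
  by rewrite meetx1 Th_refl.
move=> y m hy hm; have := Th_meet2 hm hy.
by rewrite -meetA [m `&` y]meetC.
Qed.
Lemma lo_eq x y : Th x y -> lo x = lo y.
Proof. by move=> h; rewrite /lo; apply: eq_bigl => z; exact: Th_trans_eq. Qed.
Lemma lo_mono x y : x <= y -> lo x <= lo y.
Proof.
move=> xy; have [_ h] := Th_meet x (Th_lo y).
move/meet_idPl: xy h => -> h.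
exact: le_trans (lo_min h) (leIr _ _).
Qed.
Lemma lo_idem x : lo (lo x) = lo x.
Proof. exact: esym (lo_eq (Th_lo x)). Qed.
Lemma lo_bot x : lo x = \bot -> x = \bot.
Proof. by move=> h; apply: Th_bot; rewrite -h Th_lo. Qed.
Lemma lo_top x : lo x = \top -> x = \top.
Proof. by move=> h; apply/eqP; rewrite -le1x -h lo_le. Qed.

Definition cls x := cong_class Th x.
Lemma cls_eq x y : Th x y -> cls x = cls y.
Proof. by move=> h; apply/setP => z; rewrite !inE; exact: Th_trans_eq. Qed.
Lemma cls_eqE x y : cls x = cls y -> Th x y.
Proof. move=> h; have : y \in cls y by rewrite inE Th_refl. by rewrite -h inE. Qed.

Definition rep (S : {set L}) := lo (odflt \bot [pick z in S]).
Lemma rep_cls x : rep (cls x) = lo x.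
Proof.
rewrite /rep; case: pickP => [z|]; rewrite ?inE => h /=; first by rewrite (lo_eq h).
by move: (h x); rewrite inE Th_refl.
Qed.
End Lat.
Local Open Scope classical_set_scope.
Local Open Scope ring_scope.
Local Open Scope order_scope.
Section T.
Variables (R : realType) (T : topologicalType).
Lemma cont_cst (c : R) : continuous (fun _ : T => c).
Proof. by move=> t; apply: cvg_cst. Qed.
Lemma cont_add (f g : T -> R) : continuous f -> continuous g -> continuous (fun t => f t + g t).
Proof. by move=> hf hg t; exact: (cvgD (hf t) (hg t)). Qed.
Lemma cont_sub (f g : T -> R) : continuous f -> continuous g -> continuous (fun t => f t - g t).
Proof. by move=> hf hg t; exact: (cvgB (hf t) (hg t)). Qed.
Lemma cont_min (f g : T -> R) : continuous f -> continuous g -> continuous (fun t => Num.min (f t) (g t)).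
Proof. by move=> hf hg t; exact: (@continuous_min R T f g t (hf t) (hg t)). Qed.
Lemma cont_max (f g : T -> R) : continuous f -> continuous g -> continuous (fun t => Num.max (f t) (g t)).
Proof. by move=> hf hg t; exact: (@continuous_max R T f g t (hf t) (hg t)). Qed.
Lemma cont_sum (I : Type) (r : seq I) (P : pred I) (F : I -> T -> R) :
  (forall i, continuous (F i)) -> continuous (fun t => \sum_(i <- r | P i) F i t).
Proof.
move=> h; elim: r => [|i r IH].
  under eq_fun do rewrite big_nil. exact: cont_cst.
under eq_fun do rewrite big_cons.
case: (P i) => //; exact: cont_add.
Qed.
Lemma into_ptws (V : eqType) (F : T -> {ptws V -> R}) :
  (forall v, continuous (fun t => F t v)) -> continuous F.
Proof.
move=> h t; apply/cvg_sup => v.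
have surj : (fun g : V -> R => g v) @` setT = setT.
  by rewrite eqEsubset; split => // r _; exists (fun _ => r).
apply/cvg_image => // U nU.
exists ((fun g : V -> R => g v) @^-1` U); last exact: image_preimage.
exact: (h v t U nU).
Qed.
Lemma cont_coord (V : eqType) (v : V) : continuous (fun f : {ptws V -> R} => f v).
Proof. exact: proj_continuous. Qed.
Lemma into_set_type (X : topologicalType) (A : set X) (F : T -> set_type A) :
  continuous (fun t => set_val (F t)) -> continuous F.
Proof. move=> h; exact: (@continuous_comp_initial _ _ _ (@set_val X A)). Qed.
Lemma val_cont (X : topologicalType) (A : set X) : continuous (@set_val X A).
Proof. exact: initial_continuous. Qed.
End T.
Lemma fst_cont (X Y : topologicalType) : continuous (@fst X Y).
Proof. move=> p; exact: cvg_fst. Qed.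
Lemma snd_cont (X Y : topologicalType) : continuous (@snd X Y).
Proof. move=> p; exact: cvg_snd. Qed.


Section Real.
Variable R : realType.

Definition pf (V W : finType) (h : V -> W) (x : V -> R) : W -> R :=
  fun w => \sum_(v | h v == w) x v.

Lemma pf_supp (V W : finType) (h : V -> W) x w :
  pf h x w != 0 -> exists2 v, h v = w & x v != 0.
Proof.
move=> H; apply: contrapT => N; move/negP: H; apply.
rewrite /pf; apply/eqP; apply: big1 => v /eqP hv; apply/eqP; apply: contrapT => xv.
by apply: N; exists v => //; exact/negP.
Qed.

Lemma pf_sum (V W : finType) (h : V -> W) x : \sum_w pf h x w = \sum_v x v.
Proof. by rewrite /pf [RHS](partition_big h predT) //=. Qed.

Lemma pf_comp (U V W : finType) (h1 : U -> V) (h2 : V -> W) x :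
  pf h2 (pf h1 x) = pf (fun u => h2 (h1 u)) x.
Proof.
apply/funext => w; rewrite /pf [RHS](partition_big h1 (fun S => h2 S == w)) //=.
apply: eq_bigr => S /eqP hS; apply: eq_bigl => u.
by case: (eqVneq (h1 u) S) => [->|]; rewrite ?hS ?eqxx ?andbF.
Qed.

Lemma pf_id (V : finType) (h : V -> V) y :
  (forall S, y S != 0 -> h S = S) -> pf h y = y.
Proof.
move=> H; apply/funext => w; rewrite /pf big_mkcond /=.
rewrite (eq_bigr (fun v => if v == w then y v else 0)).
  by rewrite -big_mkcond /= big_pred1_eq.
move=> v _; case: (eqVneq (y v) 0) => [->|/H ->]; first by case: (h v == w); case: (v == w).
by [].
Qed.

Lemma pf_in (V W : finType) (P : pred V) (le : rel V) (P' : pred W) (le' : rel W)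
  (h : V -> W) x :
  (forall v, P v -> P' (h v)) ->
  (forall u v, P u -> P v -> le u v -> le' (h u) (h v)) ->
  @order_complex_realization R V P le x -> @order_complex_realization R W P' le' (pf h x).
Proof.
move=> hP hle [x0 x1 xP xC]; split.
- by move=> w; apply: sumr_ge0 => v _; exact: x0.
- by rewrite pf_sum.
- by move=> w /pf_supp [v <- xv]; apply: hP; exact: xP.
- move=> w1 w2 /pf_supp [v1 <- xv1] /pf_supp [v2 <- xv2].
  have P1 := xP _ xv1; have P2 := xP _ xv2.
  case/orP: (xC _ _ xv1 xv2) => h12; apply/orP; [left|right]; exact: hle.
Qed.

Definition pfmap (V W : finType) (P : pred V) (le : rel V) (P' : pred W) (le' : rel W)
  (h : V -> W) (hP : forall v, P v -> P' (h v))
  (hle : forall u v, P u -> P v -> le u v -> le' (h u) (h v))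
  (x : set_type (@order_complex_realization R V P le)) :
  set_type (@order_complex_realization R W P' le') :=
  exist _ (pf h (set_val x)) (mem_set (pf_in hP hle (set_valP x))).

Lemma cont_val_coord (V : finType) (A : set {ptws V -> R}) (v : V) :
  continuous (fun t : set_type A => set_val t v).
Proof.
move=> t; apply: (@continuous_comp _ _ _ (@set_val _ A) (fun f : {ptws V -> R} => f v)).
  exact: val_cont.
exact: cont_coord.
Qed.

Lemma pfmap_cont (V W : finType) (P : pred V) (le : rel V) (P' : pred W) (le' : rel W)
  (h : V -> W) hP hle : continuous (@pfmap V W P le P' le' h hP hle).
Proof.
apply: into_set_type => /=; apply: into_ptws => w /=; rewrite /pf.
apply: cont_sum => v; exact: cont_val_coord.
Qed.

Lemma sum_sub (I : finType) (P Q : pred I) (x : I -> R) :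
  (forall i, 0 <= x i) -> (forall i, P i -> Q i) ->
  \sum_(i | P i) x i <= \sum_(i | Q i) x i.
Proof.
move=> x0 PQ; rewrite [X in X <= _]big_mkcond [X in _ <= X]big_mkcond /=.
apply: ler_sum => i _; case: (boolP (P i)) => Pi; first by rewrite (PQ _ Pi).
by case: (Q i).
Qed.
End Real.

Section Main.
Variables (R : realType) (disp : Order.disp_t) (L : finTBLatticeType disp) (Th : rel L).
Hypothesis HC : lattice_congruence Th.
Hypothesis Hat : forall a : L, is_atom a -> ~ Th a \bot.
Hypothesis Hco : forall a : L, is_coatom a -> ~ Th a \top.

Definition lo_ := lo Th.
Definition P1 := fun x : L => (x != \bot) && (x != \top).
Definition le1 := fun x y : L => x <= y.
Definition P2 := fun S : {set L} => [&& is_cong_class Th S, S != cong_class Th \bot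
                          & S != cong_class Th \top].
Definition le2 := fun S T : {set L} => quot_le S T.

Lemma cls_P v : P1 v -> P2 (cls Th v).
Proof.
case/andP => vb vt; apply/and3P; split.
- by apply/existsP; exists v.
- apply/negP => /eqP /(cls_eqE HC) /(Th_bot HC Hat) E; by rewrite E eqxx in vb.
- apply/negP => /eqP /(cls_eqE HC) /(Th_top HC Hco) E; by rewrite E eqxx in vt.
Qed.

Lemma cls_le u v : P1 u -> P1 v -> le1 u v -> le2 (cls Th u) (cls Th v).
Proof.
move=> _ _ uv; apply/existsP; exists u; rewrite inE Th_refl //=.
by apply/existsP; exists v; rewrite inE Th_refl.
Qed.

Lemma P2_cls S : P2 S -> exists x, S = cls Th x.
Proof. by case/and3P => /existsP [x /eqP ->] _ _; exists x. Qed.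

Lemma rep_P S : P2 S -> P1 (rep Th S).
Proof.
move=> PS; have [x Sx] := P2_cls PS; move: PS; case/and3P => _ nb nt.
rewrite Sx rep_cls //; apply/andP; split.
- apply/negP => /eqP /(lo_bot HC Hat) E; by rewrite Sx E eqxx in nb.
- apply/negP => /eqP /(lo_top HC) E; by rewrite Sx E eqxx in nt.
Qed.

Lemma rep_le S T : P2 S -> P2 T -> le2 S T -> le1 (rep Th S) (rep Th T).
Proof.
move=> PS PT; have [x Sx] := P2_cls PS; have [y Ty] := P2_cls PT.
rewrite /le2 /quot_le Sx Ty !rep_cls //.
case/existsP => a /andP []; rewrite inE => xa /existsP [b /andP []]; rewrite inE => yb ab.
rewrite /le1 (lo_eq HC xa) (lo_eq HC yb); exact: lo_mono.
Qed.

Definition fmap : proper_part_space R L -> quotient_proper_part_space R Th :=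
  @pfmap R L {set L} P1 le1 P2 le2 (cls Th) cls_P cls_le.
Definition gmap : quotient_proper_part_space R Th -> proper_part_space R L :=
  @pfmap R {set L} L P2 le2 P1 le1 (rep Th) rep_P rep_le.

Lemma fg y : fmap (gmap y) = y.
Proof.
apply: val_inj => /=; rewrite pf_comp pf_id // => S.
case: (set_valP y) => _ _ yP _ /yP PS.
have [x ->] := P2_cls PS; rewrite rep_cls //; apply/esym/cls_eq => //.
exact: Th_lo.
Qed.

Definition Fb (x : L -> R) v := \sum_(u | u < v) x u.
Definition aa (s : R) (x : L -> R) v := Num.min (x v) (Num.max 0 (s - Fb x v)).
Definition Hf (s : R) (x : L -> R) : L -> R :=
  fun w => pf lo_ (aa s x) w + (x w - aa s x w).

Section X.
Variables (s : R) (x : L -> R).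
Hypothesis x0 : forall v, 0 <= x v.

Lemma aa_ge0 v : 0 <= aa s x v.
Proof. by rewrite /aa le_min x0 le_max lexx. Qed.
Lemma aa_le v : aa s x v <= x v.
Proof. by rewrite /aa ge_min lexx. Qed.
Lemma Fb_ge0 v : 0 <= Fb x v.
Proof. by apply: sumr_ge0 => u _; exact: x0. Qed.
Lemma aa_nz v : aa s x v != 0 -> Fb x v < s.
Proof.
apply: contraNT; rewrite -leNgt => h.
rewrite /aa max_l; last by rewrite subr_le0.
by rewrite min_r ?x0.
Qed.
Lemma aa_lt v : aa s x v < x v -> s < Fb x v + x v.
Proof.
apply: contraTT; rewrite -!leNgt => h.
have := x0 v => h0.
rewrite /aa max_r; last by lra.
by rewrite min_l ?lexx //; lra.
Qed.
Lemma aa_x v : aa s x v != 0 -> x v != 0.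
Proof.
apply: contraNN => /eqP h; rewrite eq_le aa_ge0 andbT; rewrite -h; exact: aa_le.
Qed.
Lemma aa_lt_x v : aa s x v < x v -> x v != 0.
Proof. by move=> h; rewrite gt_eqF // (le_lt_trans (aa_ge0 v) h). Qed.
Lemma Fb_split v : \sum_(u | u <= v) x u = Fb x v + x v.
Proof.
rewrite (bigD1 v) //= addrC /Fb; congr (_ + _); apply: eq_bigl => u.
by rewrite lt_neqAle andbC.
Qed.
Lemma Fb_lt u v : u < v -> Fb x u + x u <= Fb x v.
Proof.
move=> uv; rewrite -Fb_split /Fb; apply: sum_sub => // z zu.
exact: le_lt_trans zu uv.
Qed.
End X.

Lemma Hf_supp s x w : Hf s x w != 0 ->
  (exists2 v, lo_ v = w & aa s x v != 0) \/ (aa s x w != x w).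
Proof.
rewrite /Hf; case: (eqVneq (pf lo_ (aa s x) w) 0) => [->|/pf_supp]; last by left.
by rewrite add0r subr_eq0 eq_sym => h; right.
Qed.

Lemma lt_of_ne s x v : (forall v, 0 <= x v) -> aa s x v != x v -> aa s x v < x v.
Proof. by move=> x0 h; rewrite lt_neqAle h aa_le. Qed.

Lemma P1lo x v : @order_complex_realization R L P1 le1 x -> x v != 0 -> P1 (lo_ v).
Proof.
case=> _ _ xP _ /xP /andP [vb vt]; apply/andP; split; apply/negP => /eqP E.
  by have := lo_bot HC Hat E; apply/eqP.
by have := lo_top HC E; apply/eqP.
Qed.

Lemma AB s x v u : @order_complex_realization R L P1 le1 x ->
  aa s x v != 0 -> aa s x u < x u -> le1 (lo_ v) u || le1 u (lo_ v).
Proof.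
case=> x0 _ _ xC hv hu.
case/orP: (xC v u (aa_x x0 hv) (aa_lt_x x0 hu)) => h.
  by rewrite /le1 (le_trans (lo_le HC v) h).
case: (eqVneq u v) => [->|neq]; first by rewrite /le1 lo_le.
have uv : u < v by rewrite lt_neqAle neq; exact: h.
have h1 := Fb_lt x0 uv; have h2 := aa_nz x0 hv; have h3 := aa_lt x0 hu.
exfalso; lra.
Qed.

Lemma Hf_in s x : @order_complex_realization R L P1 le1 x ->
  @order_complex_realization R L P1 le1 (Hf s x).
Proof.
move=> X; case: (X) => x0 x1 xP xC; split.
- move=> w; apply: addr_ge0; first by apply: sumr_ge0 => v _; exact: aa_ge0.
  by rewrite subr_ge0; exact: aa_le.
- by rewrite /Hf big_split /= pf_sum sumrB x1 addrCA subrr addr0.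
- move=> w /Hf_supp [[v <- /(aa_x x0)]|n]; first exact: P1lo.
  by apply: xP; apply: (aa_lt_x x0); exact: lt_of_ne x0 n.
- move=> w1 w2 /Hf_supp [[v1 <- a1]|n1] /Hf_supp [[v2 <- a2]|n2].
  + case/orP: (xC v1 v2 (aa_x x0 a1) (aa_x x0 a2)) => h; apply/orP; [left|right];
      rewrite /le1 /lo_ in h *; pose proof (lo_mono HC h) as HH; exact HH.
  + exact: AB X a1 (lt_of_ne x0 n2).
  + rewrite orbC; exact: AB X a2 (lt_of_ne x0 n1).
  + exact: xC (aa_lt_x x0 (lt_of_ne x0 n1)) (aa_lt_x x0 (lt_of_ne x0 n2)).
Qed.

Lemma Hf_one x : @order_complex_realization R L P1 le1 x -> Hf 1 x = pf lo_ x.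
Proof.
case=> x0 x1 _ _.
have E v : aa 1 x v = x v.
  have h : \sum_(u | u <= v) x u <= \sum_u x u by apply: sum_sub.
  rewrite Fb_split // x1 in h; have := x0 v => h0.
  rewrite /aa max_r; last by lra.
  by rewrite min_l //; lra.
apply/funext => w; rewrite /Hf E subrr addr0 /pf; apply: eq_bigr => v _; exact: E.
Qed.

Lemma Hf_zero x : @order_complex_realization R L P1 le1 x -> Hf 0 x = x.
Proof.
case=> x0 _ _ _.
have E v : aa 0 x v = 0.
  rewrite /aa max_l; last by rewrite sub0r oppr_le0 Fb_ge0.
  by rewrite min_r.
apply/funext => w; rewrite /Hf E subr0.
have -> : pf lo_ (aa 0 x) w = 0 by rewrite /pf big1 // => v _; exact: E.
by rewrite add0r.
Qed.

Lemma gf_val x : @order_complex_realization R L P1 le1 x ->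
  pf (rep Th) (pf (cls Th) x) = pf lo_ x.
Proof.
move=> _; rewrite pf_comp.
by have -> : (fun u => rep Th (cls Th u)) = lo_ by apply/funext => u; rewrite rep_cls.
Qed.

Definition Hmap (p : (set_type (@unit_interval R) * proper_part_space R L)%type) :
  proper_part_space R L :=
  exist _ (Hf (1 - set_val p.1) (set_val p.2)) (mem_set (Hf_in _ (set_valP p.2))).

Lemma ct : continuous (fun p : (set_type (@unit_interval R) * proper_part_space R L)%type =>
  set_val p.1).
Proof.
move=> p; apply: (@continuous_comp _ _ _ fst (@set_val R (@unit_interval R))).
  exact: fst_cont.
exact: val_cont.
Qed.

Lemma cx v : continuous (fun p : (set_type (@unit_interval R) * proper_part_space R L)%type =>
  set_val p.2 v).
Proof.
move=> p; apply: (@continuous_comp _ _ _ snd (fun y : proper_part_space R L => set_val y v)).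
  exact: snd_cont.
exact: cont_val_coord.
Qed.

Lemma homot_gf : homotopic R (gmap \o fmap) idfun.
Proof.
exists Hmap; split.
- apply: into_set_type => /=; apply: into_ptws => w /=; rewrite /Hf /pf /aa /Fb.
  apply: cont_add.
    apply: cont_sum => v; apply: cont_min; first exact: cx.
    apply: cont_max; first exact: cont_cst.
    apply: cont_sub; first by apply: cont_sub; [exact: cont_cst|exact: ct].
    by apply: cont_sum => u; exact: cx.
  apply: cont_sub; first exact: cx.
  apply: cont_min; first exact: cx.
  apply: cont_max; first exact: cont_cst.
  apply: cont_sub; first by apply: cont_sub; [exact: cont_cst|exact: ct].
  by apply: cont_sum => u; exact: cx.
- move=> t x t0; apply: val_inj => /=; rewrite t0 subr0 Hf_one ?gf_val //;
    exact: set_valP.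
- move=> t x t1; apply: val_inj => /=; rewrite t1 subrr Hf_zero //; exact: set_valP.
Qed.

Lemma homot_fg : homotopic R (fmap \o gmap) idfun.
Proof.
exists snd; split; first exact: snd_cont.
- by move=> t y _; rewrite /= fg.
- by [].
Qed.

End Main.

Unset Implicit Arguments.
Theorem corollary2p4 (R : realType) (disp : Order.disp_t)
  (L : finTBLatticeType disp) (Th : rel L) :
  lattice_congruence Th ->
  (forall a : L, is_atom a -> ~ Th a \bot) ->
  (forall a : L, is_coatom a -> ~ Th a \top) ->
  homotopy_equivalent R (proper_part_space R L)
                        (quotient_proper_part_space R Th).
Proof.
move=> HC Hat Hco.
exists (@fmap R disp L Th HC Hat Hco), (@gmap R disp L Th HC Hat); split.
- exact: pfmap_cont.
- exact: pfmap_cont.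
- exact: homot_gf.
- exact: homot_fg.
Qed.
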